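(* Let $G$ be a finite simple graph of order $n$ without isolated vertices, with minimum degree $\delta$ and maximum degree $\Delta$. Let $f$ be a minimum STDF of $G$ (i.e. an STDF with $f(V(G))=\gamma_{st}(G)$), and let $V_+=\{v: f(v)=1\}$, $V_-=\{v:f(v)=-1\}$, $E_+=|E(G[V_+])|$, $E_-=|E(G[V_-])|$, let $[V_+,V_-]$ be the set of edges with one end in $V_+$ and the other in $V_-$, and let $V_e$ be the set of vertices of even degree. Then (a) $\left(\lfloor\frac{\delta}{2}\rfloor+1\right)|V_-|\leq |[V_+,V_-]|\leq\left(\lceil\frac{\Delta}{2}\rceil-1\right)|V_+|$; (b) $n+|V_-|+4E_-+|V_e|\leq 2E_++|[V_+,V_-]|$.
   Context: For a vertex $v$, $N(v)$ is its open neighborhood. A signed total dominating function (STDF) of $G$ is a function $f:V(G)\to\{-1,1\}$ such that $\sum_{u\in N(v)}f(u)\geq 1$ for every vertex $v$; the signed total domination number $\gamma_{st}(G)$ is the minimum of $\sum_{v\in V(G)}f(v)$ over all STDFs $f$ of $G$. $G[X]$ denotes the subgraph induced by $X$. *)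

(* Defs.v *)
From HB Require Import structures.
From mathcomp Require Import all_boot all_order all_algebra.
Set Implicit Arguments. Unset Strict Implicit. Unset Printing Implicit Defensive.
Import Order.TTheory GRing.Theory Num.Theory.

Definition simple_graph (T : finType) (e : rel T) : Prop :=
  symmetric e /\ irreflexive e.

Definition nbhd (T : finType) (e : rel T) (v : T) : {set T} := [set u | e v u].

Definition deg (T : finType) (e : rel T) (v : T) : nat := #|nbhd e v|.

(* minimum and maximum degree (default #|T| resp. 0 on the empty vertex set) *)
Definition mindeg (T : finType) (e : rel T) : nat :=
  \big[minn/#|T|]_(v : T) deg e v.
Definition maxdeg (T : finType) (e : rel T) : nat := \max_(v : T) deg e v.

Definition no_isolated (T : finType) (e : rel T) : Prop := forall v, 0 < deg e v.

Definition edges (T : finType) (e : rel T) : {set {set T}} :=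
  [set s : {set T} | [exists u, exists v, e u v && (s == [set u; v])]].

Definition induced_edges (T : finType) (e : rel T) (X : {set T}) : {set {set T}} :=
  [set s in edges e | s \subset X].

Definition cross_edges (T : finType) (e : rel T) (X Y : {set T}) : {set {set T}} :=
  [set s in edges e | [exists u, exists v, [&& u \in X, v \in Y & s == [set u; v]]]].

Definition is_STDF (T : finType) (e : rel T) (f : T -> int) : Prop :=
  (forall v, f v = 1%R \/ f v = (-1)%R) /\
  (forall v, (1 <= \sum_(u in nbhd e v) f u)%R).

Definition weight (T : finType) (f : T -> int) : int := (\sum_(v : T) f v)%R.

Definition is_min_STDF (T : finType) (e : rel T) (f : T -> int) : Prop :=
  is_STDF e f /\ forall g, is_STDF e g -> (weight f <= weight g)%R.

Definition Vplus (T : finType) (f : T -> int) : {set T} := [set v | f v == 1%R].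
Definition Vminus (T : finType) (f : T -> int) : {set T} := [set v | f v == (-1)%R].
Definition Veven (T : finType) (e : rel T) : {set T} := [set v | ~~ odd (deg e v)].

(* Main.v *)
Require Import Defs.
From HB Require Import structures.
From mathcomp Require Import all_boot all_order all_algebra.
From mathcomp Require Import zify.
Set Implicit Arguments. Unset Strict Implicit. Unset Printing Implicit Defensive.
Import Order.TTheory GRing.Theory Num.Theory.


Section G.
Variables (T : finType) (e : rel T).
Hypothesis esym : symmetric e.
Hypothesis eirr : irreflexive e.

Lemma set2_eqP (u v a b : T) : [set u; v] = [set a; b] ->
  (u = a /\ v = b) \/ (u = b /\ v = a).
Proof.
move=> H.
have hu : u \in [set a; b] by rewrite -H !inE eqxx.
have hv : v \in [set a; b] by rewrite -H !inE eqxx orbT.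
have ha : a \in [set u; v] by rewrite H !inE eqxx.
have hb : b \in [set u; v] by rewrite H !inE eqxx orbT.
move: hu hv ha hb; rewrite !inE.
case/orP=> /eqP eu; case/orP=> /eqP ev; subst=> ha hb;
  repeat match goal with H: is_true ((_ == _) || (_ == _)) |- _ =>
    case/orP: H => /eqP H; subst end; by [left|right].
Qed.

Lemma mindeg_le v : mindeg e <= deg e v.
Proof.
rewrite /mindeg.
have : v \in index_enum T by rewrite mem_index_enum.
elim: (index_enum T) => [//|x r IH]; rewrite inE big_cons /=.
case/orP=> [/eqP <-|/IH]; first exact: geq_minl.
by move=> h; rewrite geq_min h orbT.
Qed.

Lemma maxdeg_ge v : deg e v <= maxdeg e.
Proof. exact: (leq_bigmax (F := deg e)). Qed.

Definition pairs (X Y : {set T}) : {set T * T} :=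
  [set p | [&& e p.1 p.2, p.1 \in X & p.2 \in Y]].

Lemma pairsE X Y : #|pairs X Y| = \sum_x \sum_y (e x y && (x \in X) && (y \in Y) : nat).
Proof.
rewrite pair_big /= -sum1_card big_mkcond /=; apply: eq_bigr => [[x y]] _.
by rewrite !inE /= -andbA; case: (_ && _).
Qed.

Lemma pairs_sym X Y : #|pairs X Y| = #|pairs Y X|.
Proof.
rewrite !pairsE exchange_big /=; apply: eq_bigr => x _; apply: eq_bigr => y _.
by rewrite (esym y x); case: (e x y); case: (x \in Y); case: (y \in X).
Qed.

Lemma pairs_nb X Y : #|pairs X Y| = \sum_(x in X) #|nbhd e x :&: Y|.
Proof.
rewrite pairsE [RHS]big_mkcond; apply: eq_bigr => x _.
case: (x \in X); last by apply: big1 => y _; rewrite andbF.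
rewrite -sum1_card [RHS]big_mkcond; apply: eq_bigr => y _.
by rewrite !inE andbT.
Qed.

Definition mk (p : T * T) : {set T} := [set p.1; p.2].

Lemma induced_pairs X : 2 * #|induced_edges e X| = #|pairs X X|.
Proof.
rewrite -[#|pairs _ _|]sum1_card (partition_big mk (mem (induced_edges e X))) /=.
  rewrite mulnC -sum_nat_const; apply: eq_bigr => s.
  rewrite !inE => /andP [/existsP [a /existsP [b /andP [eab /eqP ->]]] sub].
  rewrite sum1_card.
  have [aX bX] : a \in X /\ b \in X.
    by split; apply: (subsetP sub); rewrite !inE eqxx ?orbT.
  have ab : a != b by apply/eqP => h; move: eab; rewrite h eirr.
  have -> : 2 = #|[set (a, b); (b, a)]|.
    by rewrite cards2 -pair_eqE /= (negbTE ab).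
  apply: eq_card => [[x y]].
  rewrite [in RHS]unfold_in /= !inE /= -!pair_eqE /= /mk /=.
  apply/idP/idP.
  - case/orP=> /andP [/eqP -> /eqP ->]; rewrite ?eqxx ?andbT ?aX ?bX ?eab //=.
      by rewrite esym eab setUC eqxx.
  - case/andP=> /and3P [exy xX yX] /eqP /set2_eqP [[-> ->]|[-> ->]];
      by rewrite !eqxx ?orbT.
move=> [x y]; rewrite !inE /= => /and3P [exy xX yX].
rewrite /mk /=; apply/andP; split.
  by apply/existsP; exists x; apply/existsP; exists y; rewrite exy eqxx.
by rewrite subUset !sub1set xX yX.
Qed.

Lemma cross_pairs (X Y : {set T}) : [disjoint X & Y] -> #|cross_edges e X Y| = #|pairs X Y|.
Proof.
move=> dXY.
rewrite -[#|pairs _ _|]sum1_card (partition_big mk (mem (cross_edges e X Y))) /=.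
  rewrite -sum1_card; apply: eq_bigr => s.
  rewrite !inE => /andP [/existsP [a /existsP [b /andP [eab /eqP sab]]]].
  case/existsP => u /existsP [v /and3P [uX vY /eqP suv]].
  have euv : e u v.
    by case: (set2_eqP (etrans (Logic.eq_sym suv) sab)) => [[-> ->]|[-> ->]] //; rewrite esym.
  rewrite sum1_card -(cards1 (u, v)); apply: eq_card => [[x y]].
  rewrite [in RHS]unfold_in /= !inE /= -!pair_eqE /= /mk /=.
  apply/idP/idP; last first.
  - case/andP=> /and3P [exy xX yX] /eqP; rewrite suv => /set2_eqP [[? ?]|[? ?]]; subst.
      by rewrite !eqxx.
    by rewrite (disjointFr dXY xX) in vY.
  - by case/andP=> /eqP -> /eqP ->; rewrite euv uX vY suv eqxx.
move=> [x y]; rewrite !inE /= => /and3P [exy xX yX].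
rewrite /mk /=; apply/andP; split.
  by apply/existsP; exists x; apply/existsP; exists y; rewrite exy eqxx.
by apply/existsP; exists x; apply/existsP; exists y; rewrite xX yX eqxx.
Qed.

End G.

Lemma sum_ind (T : finType) (A B : {set T}) : \sum_(x in A) ((x \in B) : nat) = #|A :&: B|.
Proof.
rewrite -sum1_card (eq_bigr (fun x => if x \in B then 1 else 0)); last by move=> x _; case: (x \in B).
rewrite -big_mkcondr; apply: eq_bigl => x; by rewrite !inE.
Qed.

Lemma nb_sum (T : finType) (e : rel T) (f : T -> int) v :
  (forall v, f v = 1%R \/ f v = (-1)%R) ->
  (\sum_(u in nbhd e v) f u = #|nbhd e v :&: Vplus f|%:Z - #|nbhd e v :\: Vplus f|%:Z)%R.
Proof.
move=> fpm; rewrite (big_setID (Vplus f)) /=.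
rewrite (eq_bigr (fun _ => 1%R)); last by move=> u; rewrite !inE => /andP [_ /eqP].
rewrite [X in (_ + X)%R](eq_bigr (fun _ => (-1)%R)); last first.
  by move=> u; rewrite !inE => /andP [/eqP h _]; case: (fpm u).
by rewrite !sumr_const mulNrn -!natz.
Qed.

Lemma key_int (p m : nat) : (1 <= p%:Z - m%:Z)%R -> m < p.
Proof. move=> h; lia. Qed.

Theorem lemma3p1 (T : finType) (e : rel T) (f : T -> int) :
  simple_graph e -> no_isolated e -> is_min_STDF e f ->
  let delta := mindeg e in
  let Delta := maxdeg e in
  let Vp := Vplus f in
  let Vm := Vminus f in
  let Ep := #|induced_edges e Vp| in
  let Em := #|induced_edges e Vm| in
  let C := #|cross_edges e Vp Vm| in
  (* (a) *)
  ((delta./2 + 1) * #|Vm| <= C /\ C <= ((uphalf Delta) - 1) * #|Vp|)%N /\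
  (* (b) *)
  (#|T| + #|Vm| + 4 * Em + #|Veven e| <= 2 * Ep + C)%N.
Proof.
move=> [esy eirr] _ [[fpm fsum] _] delta Delta Vp Vm Ep Em C.
have VmE : Vm = ~: Vp.
  apply/setP => v; rewrite !inE; case: (fpm v) => ->; by [].
pose p v := #|nbhd e v :&: Vp|.
pose m v := #|nbhd e v :&: Vm|.
have degE v : deg e v = p v + m v.
  by rewrite /p /m VmE -setDE cardsID.
have key v : m v < p v.
  by apply: key_int; move: (fsum v); rewrite nb_sum // /m VmE -setDE.
have keyE v : m v + 1 + ((v \in Veven e) : nat) <= p v.
  rewrite inE; move: (key v) (degE v); case: (boolP (odd _)) => /= od.
    by rewrite addn0 addn1.
  move=> h hd; rewrite hd in od.
  have : p v != (m v).+1.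
    by apply/eqP => hp; move: od; rewrite hp addSn addnn /= odd_double.
  lia.
have dis : [disjoint Vp & Vm].
  by rewrite VmE -subsets_disjoint.
have hCp : C = \sum_(x in Vp) m x by rewrite /C cross_pairs // pairs_nb.
have hCm : C = \sum_(x in Vm) p x by rewrite /C cross_pairs // pairs_sym // pairs_nb.
have hEp : 2 * Ep = \sum_(x in Vp) p x by rewrite /Ep induced_pairs // pairs_nb.
have hEm : 2 * Em = \sum_(x in Vm) m x by rewrite /Em induced_pairs // pairs_nb.
split; [split|].
- rewrite mulnC -sum_nat_const hCm; apply: leq_sum => x _.
  move: (mindeg_le e x) (degE x) (key x); rewrite -/delta.
  move: (odd_double_half delta); case: (odd delta) => /=; lia.
- rewrite hCp mulnC -sum_nat_const; apply: leq_sum => x _.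
  move: (maxdeg_ge e x) (degE x) (key x); rewrite -/Delta uphalf_half.
  move: (odd_double_half Delta); case: (odd Delta) => /=; lia.
- have hT : #|T| = #|Vp| + #|Vm| by rewrite VmE cardsC.
  have hV : #|Veven e| = #|Vp :&: Veven e| + #|Vm :&: Veven e|.
    by rewrite -(cardsID Vp (Veven e)) VmE setDE (setIC (Veven e) Vp) (setIC (Veven e) (~: Vp)).
  have s1 : \sum_(x in Vp) (m x + 1 + ((x \in Veven e) : nat)) <= \sum_(x in Vp) p x.
    by apply: leq_sum => x _; exact: keyE.
  have s2 : \sum_(x in Vm) (m x + 1 + ((x \in Veven e) : nat)) <= \sum_(x in Vm) p x.
    by apply: leq_sum => x _; exact: keyE.
  rewrite !big_split /= !sum1_card !sum_ind in s1 s2.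
  rewrite -hCp -hEp in s1; rewrite -hCm -hEm in s2.
  lia.
Qed.
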